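(* Let $\mathcal{T}$ be a finite tree, $w:V(\mathcal{T})\to\mathbb{R}_{\ge0}$, $m=w(\mathcal{T})$, $\alpha\in[\tfrac13,\tfrac12]$, and let $c$ be an $\alpha$-centroid of $(\mathcal{T},w)$. Then $$\mathtt{OPT}(\mathcal{T},w)\ge(2-3\alpha)m+(3\alpha-1)w(c)+\sum_{\mathcal{H}\in\mathbb{C}(\mathcal{T}-c)}\mathtt{OPT}(\mathcal{H},w).$$
   Context: $\mathbb{C}(G)$ denotes the set of connected components of a graph $G$. For a subgraph $\mathcal{H}$, $w(\mathcal{H})=\sum_{x\in V(\mathcal{H})}w(x)$, and $w$ also denotes its restriction to $V(\mathcal{H})$. A search tree on a tree $\mathcal{T}$ is a rooted tree $T$ with vertex set $V(\mathcal{T})$ defined recursively: its root is an arbitrary vertex $r$, and the children of $r$ are the roots of search trees built on the connected components of $\mathcal{T}-r$; a single-vertex tree has only itself as search tree. $\mathtt{cost}_w(T)=\sum_x w(x)\,\mathtt{depth}_T(x)$ with root depth $1$; $\mathtt{OPT}(\mathcal{T},w)$ is the minimum cost over all search trees on $\mathcal{T}$. A vertex $v$ is an $\alpha$-centroid of $(\mathcal{T},w)$ if every component $\mathcal{H}$ of $\mathcal{T}-v$ has $w(\mathcal{H})\le\alpha\,w(\mathcal{T})$. *)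

(* Defs.v *)
From mathcomp Require Import all_boot all_order all_algebra.
From mathcomp Require Import classical_sets reals.
Set Implicit Arguments. Unset Strict Implicit. Unset Printing Implicit Defensive.
Import Order.TTheory GRing.Theory Num.Theory.
Local Open Scope ring_scope.

Section Defs.
Variables (T : finType) (e : rel T).

Definition induced (S : {set T}) : rel T :=
  fun x y => [&& e x y, x \in S & y \in S].

Definition comps (S : {set T}) : {set {set T}} :=
  [set [set y in S | connect (induced S) x y] | x in S].

(* (T, e) is a finite tree: connected, with |V| - 1 (undirected) edges;
   e is assumed symmetric and irreflexive separately. *)
Definition is_tree : Prop :=
  (forall x y : T, connect e x y) /\
  #|[set p : T * T | e p.1 p.2]| = (#|T| - 1).*2.

(* [IsST S d]: d is the depth function (root at depth 1, 0 outside S) of a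
   search tree on the subtree induced by S, following the recursive
   definition: a root r in S whose children are roots of search trees on
   the connected components of S - r. *)
Inductive IsST : {set T} -> (T -> nat) -> Prop :=
  | ST_node (S : {set T}) (d : T -> nat) (r : T) :
      r \in S ->
      (forall x, x \notin S -> d x = 0%N) ->
      d r = 1%N ->
      (forall H, H \in comps (S :\ r) ->
         exists dH, IsST H dH /\ (forall x, x \in H -> d x = (dH x).+1)) ->
      IsST S d.

Variables (R : realType) (w : T -> R).

Definition wS (S : {set T}) : R := \sum_(x in S) w x.

Definition cost (S : {set T}) (d : T -> nat) : R := \sum_(x in S) w x * (d x)%:R.

(* OPT(S, w): minimum cost of a search tree on S (the set of costs is finite
   and nonempty for nonempty connected S, so [inf] is attained). *)
Definition OPT (S : {set T}) : R :=
  inf (fun v : R => exists2 d, IsST S d & cost S d = v).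

Definition is_centroid (alpha : R) (c : T) : Prop :=
  forall H, H \in comps ([set: T] :\ c)%SET -> wS H <= alpha * wS [set: T]%SET.

End Defs.

(* Main.v *)
Require Import Defs.
From mathcomp Require Import all_boot all_order all_algebra.
From mathcomp Require Import classical_sets reals.
Import Order.TTheory GRing.Theory Num.Theory.
Local Open Scope ring_scope.
From mathcomp Require Import boolp lra.
Set Implicit Arguments. Unset Strict Implicit. Unset Printing Implicit Defensive.
Local Close Scope ring_scope.
Section Comps.
Variables (T : finType) (e : rel T).
Hypothesis sym_e : symmetric e.

Definition cls (S : {set T}) x := [set y in S | connect (induced e S) x y].
Definition conn (H : {set T}) := forall x y, x \in H -> y \in H -> connect (induced e H) x y.

Lemma induced_sym S : symmetric (induced e S).
Proof. by move=> x y; rewrite /induced sym_e; case: (x \in S); case: (y \in S); rewrite ?andbF. Qed.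

Lemma isym S : connect_sym (induced e S).
Proof.
apply: symmetric_from_pre => x _ /connectP[p e_p ->].
elim: p x e_p => //= y p IHp x /andP[e_xy /IHp{IHp}/connect_trans]; apply.
by apply: connect1; rewrite induced_sym.
Qed.

Lemma comps_part S : finset.partition (comps e S) S.
Proof.
apply: equivalence_partitionP => x y z _ _ _; split; first exact: connect0.
move=> Cxy; apply/idP/idP; first by apply: connect_trans; rewrite isym.
exact: connect_trans.
Qed.

Lemma cls_in (S : {set T}) x : x \in S -> x \in cls S x.
Proof. by move=> xS; rewrite inE xS connect0. Qed.

Lemma cls_comps (S : {set T}) x : x \in S -> cls S x \in comps e S.
Proof. by move=> xS; apply: imset_f. Qed.

Lemma comps_sub S K : K \in comps e S -> K \subset S.
Proof. by case/imsetP=> x _ ->; apply/fintype.subsetP=> y; rewrite inE => /andP[]. Qed.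

Lemma comps_cls S K x : K \in comps e S -> x \in K -> K = cls S x.
Proof.
case/imsetP=> y yS -> /[!inE] /andP[xS cyx]; apply/setP=> z; rewrite !inE.
apply: andb_id2l => zS; apply/idP/idP; last exact: connect_trans.
by apply: connect_trans; rewrite isym.
Qed.

Lemma comps_ne S K : K \in comps e S -> exists x, x \in K.
Proof. by case/imsetP=> x xS ->; exists x; apply: cls_in. Qed.

Lemma connect_ind2 (r : rel T) (P : T -> Prop) x :
  P x -> (forall a b, connect r x a -> P a -> r a b -> P b) ->
  forall y, connect r x y -> P y.
Proof.
move=> Px step y /connectP[p pth ->].
suff: forall a, connect r x a -> P a -> path r a p -> P (last a p) by apply=> //; exact: connect0.
elim: p {pth} => //= b p IH a ca Pa /andP[rab pb].
have cb : connect r x b by apply: connect_trans ca (connect1 rab).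
exact: IH cb (step _ _ ca Pa rab) pb.
Qed.

Lemma comps_conn S K : K \in comps e S -> conn K.
Proof.
case/imsetP=> x xS ->.
have key: forall y, connect (induced e S) x y -> connect (induced e (cls S x)) x y.
  apply: connect_ind2; first exact: connect0.
  move=> a b ca cKa /and3P[eab aS bS]; apply: connect_trans cKa (connect1 _).
  by rewrite /induced eab !inE aS bS ca /= (connect_trans ca (connect1 _)) // /induced eab aS bS.
move=> y z /[!inE] /andP[_ /key cy] /andP[_ /key cz].
by apply: connect_trans cz; rewrite isym.
Qed.

Lemma induced_mono (A B : {set T}) : A \subset B -> subrel (induced e A) (induced e B).
Proof. by move=> /fintype.subsetP AB x y /and3P[exy /AB xB /AB yB]; rewrite /induced exy xB yB. Qed.

Lemma connect_mono (A B : {set T}) x y : A \subset B -> connect (induced e A) x y -> connect (induced e B) x y.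
Proof. by move=> AB; apply: connect_sub => a b /(induced_mono AB) /connect1. Qed.

Lemma conn_sub_cls (S H : {set T}) x : H \subset S -> conn H -> x \in H -> H \subset cls S x.
Proof.
move=> HS cH xH; apply/fintype.subsetP=> y yH; rewrite inE (fintype.subsetP HS) //=.
exact: connect_mono HS (cH _ _ xH yH).
Qed.


Lemma st_inv S d : IsST e S d -> exists r, [/\ r \in S, d r = 1%N,
  (forall x, x \notin S -> d x = 0%N),
  (forall K, K \in comps e (S :\ r) -> exists dK, IsST e K dK /\ (forall x, x \in K -> d x = (dK x).+1))
  & (forall x, x \in S -> x != r -> exists dK, IsST e (cls (S :\ r) x) dK /\ d x = (dK x).+1)].
Proof.
case=> {}S {}d r rS out dr hyp; exists r; split=> // x xS xr.
have xS' : x \in S :\ r by rewrite !inE xr.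
have [dK [stK eqK]] := hyp _ (cls_comps xS').
by exists dK; split=> //; apply: eqK; apply: cls_in.
Qed.

Lemma depth_pos S d x : IsST e S d -> x \in S -> (0 < d x)%N.
Proof.
move=> /st_inv[r [rS dr _ _ hx]] xS; have [->|xr] := eqVneq x r; first by rewrite dr.
by have [dK [_ ->]] := hx x xS xr.
Qed.

Lemma depth_ge2 S d r x : IsST e S d -> r \in S -> d r = 1%N -> x \in S -> x != r -> (1 < d x)%N.
Proof.
move=> st rS dr xS xr; have [r' [r'S dr' _ _ hx]] := st_inv st.
have [er|ner] := eqVneq r r'.
  by subst r'; have [dK [stK ->]] := hx x xS xr; rewrite ltnS (depth_pos stK) // cls_in // !inE xr.
have [dK [stK eqK]] := hx r rS ner; rewrite eqK in dr.
have rK : r \in cls (S :\ r') r by apply: cls_in; rewrite !inE ner rS.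
by have := depth_pos stK rK; case: (dK r) dr.
Qed.

Lemma build (S : {set T}) r (P : {set T} -> (T -> nat) -> Prop) : r \in S ->
  (forall K, K \in comps e (S :\ r) -> exists f, IsST e K f /\ P K f) ->
  exists d, [/\ IsST e S d, d r = 1%N &
    forall x, x \in S -> x != r -> exists f, P (cls (S :\ r) x) f /\ d x = (f x).+1].
Proof.
move=> rS hK.
have hex : forall K : {set T}, exists f : T -> nat, K \in comps e (S :\ r) -> IsST e K f /\ P K f.
  move=> K; case: (boolP (K \in comps e (S :\ r))) => [/hK [f hf]|nK]; first by exists f.
  by exists (fun _ => 0%N).
have [F hF] := choice hex.
pose d x := if x \in S then (if x == r then 1%N else (F (cls (S :\ r) x) x).+1) else 0%N.
exists d; split; last first.
- move=> x xS xr; exists (F (cls (S :\ r) x)); split; last by rewrite /d xS (negbTE xr).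
  have xS' : x \in S :\ r by rewrite !inE xr.
  by case: (hF _ (cls_comps xS')).
- by rewrite /d rS eqxx.
apply: (@ST_node _ _ S d r rS) => [x /negbTE nx||K Kc]; first by rewrite /d nx.
  by rewrite /d rS eqxx.
exists (F K); split; first by case: (hF _ Kc).
move=> x xK; have := fintype.subsetP (comps_sub Kc) _ xK; rewrite !inE => /andP[xr xS].
by rewrite /d xS (negbTE xr) -(comps_cls Kc xK).
Qed.

Lemma card_comps (S : {set T}) r K : r \in S -> K \in comps e (S :\ r) -> (#|K| < #|S|)%N.
Proof.
move=> rS Kc; rewrite (cardsD1 r S) rS add1n ltnS.
exact: subset_leq_card (comps_sub Kc).
Qed.

Lemma exists_st n : forall S : {set T}, (#|S| <= n)%N -> (exists x, x \in S) -> exists d, IsST e S d.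
Proof.
elim: n => [|n IH] S szS [r rS]; first by move: szS; rewrite leqn0 => /eqP/cards0_eq S0; rewrite S0 inE in rS.
have hK : forall K, K \in comps e (S :\ r) -> exists f, IsST e K f /\ True.
  move=> K Kc; have [f hf] := IH K (leq_trans (card_comps rS Kc) szS) (comps_ne Kc).
  by exists f.
have [d [st _ _]] := @build S r (fun _ _ => True) rS hK.
by exists d.
Qed.


Lemma restr n : forall (S : {set T}) d, (#|S| <= n)%N -> IsST e S d ->
  forall H : {set T}, H \subset S -> conn H -> (exists x, x \in H) ->
  exists dH, IsST e H dH /\ (forall k, (forall y, y \in H -> (k < d y)%N) ->
     forall x, x \in H -> (dH x + k <= d x)%N).
Proof.
elim: n => [|n IH] S d szS st H HS cH [x0 xH].
  by move: szS; rewrite leqn0 => /eqP/cards0_eq S0; move: (fintype.subsetP HS _ xH); rewrite S0 inE.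
have [r [rS dr out hK hx]] := st_inv st.
case: (boolP (r \in H)) => rH.
  have hK' : forall K, K \in comps e (H :\ r) -> exists f, IsST e K f /\
      (forall x, x \in K -> ((f x).+1 <= d x)%N).
    move=> K Kc; have [x1 x1K] := comps_ne Kc.
    have KH := comps_sub Kc.
    have KS : K \subset S :\ r by apply: (fintype.subset_trans KH); apply: finset.setSD.
    have x1S : x1 \in S :\ r by apply: (fintype.subsetP KS).
    have K'c := cls_comps x1S.
    have [dK [stK eqK]] := hK _ K'c.
    have KK' := conn_sub_cls KS (comps_conn Kc) x1K.
    have [f [stf hf]] := IH _ _ (leq_trans (card_comps rS K'c) szS) stK K KK' (comps_conn Kc) (ex_intro _ x1 x1K).
    exists f; split=> // x xK; rewrite eqK ?(fintype.subsetP KK') // ltnS.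
    have := hf 0%N _ x xK; rewrite addn0; apply=> y yK.
    by apply: (depth_pos stK); apply: (fintype.subsetP KK').
  have [dH [stH dHr hdH]] := build rH hK'.
  exists dH; split=> // k hk x xHx.
  have k0 : k = 0%N by move: (hk r rH); rewrite dr; case: k {hk}.
  rewrite k0 addn0; have [->|xr] := eqVneq x r; first by rewrite dHr dr.
  have [f [hf ->]] := hdH x xHx xr; apply: hf; apply: cls_in; rewrite !inE xr.
  exact: xHx.
have HS' : H \subset S :\ r.
  by apply/fintype.subsetP=> y yH; rewrite !inE (fintype.subsetP HS) // andbT; apply: contraNneq rH => <-.
have x0S : x0 \in S :\ r by apply: (fintype.subsetP HS').
have K'c := cls_comps x0S.
have [dK [stK eqK]] := hK _ K'c.
have HK := conn_sub_cls HS' cH xH.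
have [dH [stH hdH]] := IH _ _ (leq_trans (card_comps rS K'c) szS) stK H HK cH (ex_intro _ x0 xH).
exists dH; split=> // k hk x xHx.
have xK : x \in cls (S :\ r) x0 := fintype.subsetP HK _ xHx.
rewrite eqK //; case: k hk => [|k] hk.
  rewrite addn0; apply: leqW; rewrite -[dH x]addn0; apply: hdH => // y yH.
  by apply: (depth_pos stK); apply: (fintype.subsetP HK).
rewrite addnS ltnS; apply: hdH => // y yH.
by move: (hk y yH); rewrite eqK ?(fintype.subsetP HK).
Qed.

End Comps.
Local Open Scope ring_scope.
Section Main.
Variables (R : realType) (T : finType) (e : rel T) (w : T -> R).
Hypothesis sym_e : symmetric e.
Hypothesis w0 : forall x, 0 <= w x.

Lemma cost_ge0 (S : {set T}) d : 0 <= cost w S d.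
Proof. by apply: sumr_ge0 => x _; apply: mulr_ge0. Qed.

Lemma wS_ge0 (S : {set T}) : 0 <= wS w S.
Proof. by apply: sumr_ge0 => x _. Qed.

Lemma OPT_le (S : {set T}) d : IsST e S d -> OPT e w S <= cost w S d.
Proof.
move=> st; apply: ge_inf; last by exists d.
by exists 0 => v [d' _ <-]; apply: cost_ge0.
Qed.

Lemma comp_bound (S : {set T}) d (H : {set T}) k : IsST e S d -> H \subset S -> conn e H -> (exists x, x \in H) ->
  (forall y, y \in H -> (k < d y)%N) ->
  OPT e w H + k%:R * wS w H <= \sum_(x in H) w x * (d x)%:R.
Proof.
move=> st HS cH neH hk.
have [dH [stH hdH]] := restr sym_e (leqnn _) st HS cH neH.
apply: le_trans (lerD (OPT_le stH) (lexx _)) _.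
rewrite /cost /wS mulr_sumr -big_split /=; apply: ler_sum => x xH.
rewrite (mulrC _ (w x)) -mulrDr; apply: ler_wpM2l => //.
by rewrite -natrD ler_nat; apply: hdH.
Qed.

Lemma split_sum (S : {set T}) c (F : T -> R) : c \in S ->
  \sum_(x in S) F x = F c + \sum_(H in comps e (S :\ c)) \sum_(x in H) F x.
Proof.
move=> cS; rewrite (big_setD1 c cS) /=; congr (_ + _).
exact: set_partition_big (comps_part sym_e (S :\ c)).
Qed.

Lemma one_sum (S : {set T}) y (f : {set T} -> R) b :
  (forall H, H \in comps e S -> 0 <= f H <= b) -> 0 <= b ->
  \sum_(H in comps e S) (if y \in H then f H else 0) <= (if y \in S then b else 0).
Proof.
move=> hf b0; case: (boolP (y \in S)) => yS; last first.
  rewrite big1 // => H Hc; case: ifP => // yH.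
  by move: (fintype.subsetP (comps_sub Hc) _ yH); rewrite (negbTE yS).
have Kc := @cls_comps _ e S y yS.
rewrite (bigD1 _ Kc) /= (@cls_in _ e S y yS) big1 ?addr0; first by case/andP: (hf _ Kc).
move=> H /andP[Hc HK]; case: ifP => // yH.
by move: HK; rewrite (comps_cls sym_e Hc yH) eqxx.
Qed.


Lemma in_C c r (H : {set T}) y : (forall x y, connect e x y) -> r != c ->
  H \in comps e ([set: T] :\ c) -> r \notin H -> y \in H -> y \in cls e ([set: T] :\ r) c.
Proof.
move=> hconn rc Hc rH yH.
pose P z := z = c \/ exists2 u, e c u && (u != c) & connect (induced e ([set: T] :\ c)) u z.
have hP : forall z, connect e c z -> P z.
  apply: connect_ind2; first by left.
  move=> a b _ Pa eab; have [->|bc] := eqVneq b c; first by left.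
  right; have [ac|anc] := eqVneq a c; first by subst a; exists b; rewrite ?connect0 // eab bc.
  case: Pa => [ac|[u hu cu]]; first by rewrite ac eqxx in anc.
  exists u => //; apply: connect_trans cu (connect1 _).
  by rewrite /induced eab !inE bc anc.
have HS := comps_sub Hc.
have yc : y != c by move: (fintype.subsetP HS _ yH); rewrite !inE => /andP[].
have [|] := hP y (hconn c y); first by move/eqP; rewrite (negbTE yc).
move=> [u /andP[ecu uc] cuy].
have uH : u \in H.
  rewrite (comps_cls sym_e Hc yH) inE !inE uc /=.
  by rewrite (isym sym_e) cuy.
have HV : H \subset [set: T] :\ r.
  by apply/fintype.subsetP=> z zH; rewrite !inE andbT; apply: contraNneq rH => <-.
have ur : u \in [set: T] :\ r by apply: (fintype.subsetP HV).
rewrite inE (fintype.subsetP HV _ yH) /=.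
apply: (connect_trans (connect1 _) (connect_mono HV (comps_conn sym_e Hc uH yH))).
by rewrite /induced ecu ur !inE eq_sym rc.
Qed.

End Main.
Unset Implicit Arguments. Set Strict Implicit.
Theorem mainTheorem12 (R : realType) (T : finType) (e : rel T)
    (w : T -> R) (alpha : R) (c : T) :
  symmetric e -> irreflexive e -> is_tree e ->
  (forall x, 0 <= w x) ->
  3^-1 <= alpha <= 2^-1 ->
  is_centroid e w alpha c ->
  OPT e w [set: T]%SET >=
    (2 - 3 * alpha) * wS w [set: T]%SET + (3 * alpha - 1) * w c
    + \sum_(H in comps e ([set: T] :\ c)%SET) OPT e w H.
Proof.
move=> sym _ [hconn _] w0 /andP[a1 a2] cent.
set V := [set: T]; set m := wS w V.
have cV : c \in V by rewrite inE.
have [d0 st0] := exists_st sym (leqnn #|V|) (ex_intro _ c cV).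
apply: lb_le_inf; first by exists (cost w V d0); exists d0.
move=> v [d st <-].
set O := \sum_(H in comps e (V :\ c)) OPT e w H.
set W := \sum_(H in comps e (V :\ c)) wS w H.
have key : forall kf : {set T} -> nat,
   (forall H, H \in comps e (V :\ c) -> forall y, y \in H -> (kf H < d y)%N) ->
   w c * (d c)%:R + O + \sum_(H in comps e (V :\ c)) (kf H)%:R * wS w H <= cost w V d.
  move=> kf hk; rewrite /cost (split_sum sym _ cV) -addrA lerD2l /O -big_split /=.
  apply: ler_sum => H Hc.
  apply: (comp_bound sym w0 st (finset.subsetT H) (comps_conn sym Hc) (comps_ne Hc)).
  exact: hk Hc.
have hm : m = w c + W by rewrite /m /wS (split_sum sym _ cV).
have W0 : 0 <= W by apply: sumr_ge0 => H _; apply: wS_ge0.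
have wc0 := w0 c.
have hb : forall H, H \in comps e (V :\ c) -> 0 <= wS w H <= alpha * m.
  by move=> H Hc; rewrite wS_ge0 //=; apply: cent.
have al0 : 0 <= alpha by apply: le_trans a1; rewrite invr_ge0.
have am0 : 0 <= alpha * m by apply: mulr_ge0 => //; apply: wS_ge0.
have b1 : 1 <= 3 * alpha.
  by have := ler_wpM2l (ler0n R 3) a1; rewrite mulfV // pnatr_eq0.
have b2 : 2 * alpha <= 1.
  by have := ler_wpM2l (ler0n R 2) a2; rewrite mulfV // pnatr_eq0.
have [r [rV dr _ hK _]] := st_inv st.
have [rc|rnc] := eqVneq r c.
  subst r.
  have hk : forall H, H \in comps e (V :\ c) -> forall y, y \in H -> (1 < d y)%N.
    move=> H Hc y yH; apply: (depth_ge2 st cV dr); first by rewrite inE.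
    by move: (fintype.subsetP (comps_sub Hc) _ yH); rewrite !inE => /andP[].
  have := key (fun _ => 1%N) hk.
  under eq_bigr do rewrite mul1r.
  rewrite dr -/W mulr1 => hc; apply: le_trans hc.
  have h3 : 0 <= (3 * alpha - 1) * W.
    by apply: mulr_ge0 => //; rewrite subr_ge0.
  rewrite hm; nra.
have cC : c \in V :\ r by rewrite !inE eq_sym rnc.
have [dC [stC eqC]] := hK _ (cls_comps e cC).
have cC' : c \in cls e (V :\ r) c := cls_in e cC.
have [r2 [r2C dCr2 _ _ _]] := st_inv stC.
pose kf (H : {set T}) := if r \in H then 0%N else if r2 \in H then 1%N else 2%N.
have hk : forall H, H \in comps e (V :\ c) -> forall y, y \in H -> (kf H < d y)%N.
  move=> H Hc y yH; rewrite /kf; case: ifP => rH.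
    by apply: (depth_pos st); rewrite inE.
  have yC := in_C sym hconn rnc Hc (negbT rH) yH.
  rewrite eqC // ltnS; case: ifP => r2H; first exact: depth_pos stC yC.
  apply: (depth_ge2 stC r2C dCr2 yC); apply: contraFneq r2H => <-; exact: yH.
have := key kf hk.
set S1 := \sum_(H in comps e (V :\ c)) (if r \in H then wS w H else 0).
set S2 := \sum_(H in comps e (V :\ c)) (if r2 \in H then wS w H else 0).
have hsum : 2 * W - 2 * S1 - S2 <= \sum_(H in comps e (V :\ c)) (kf H)%:R * wS w H.
  rewrite /W /S1 /S2 !mulr_sumr -!sumrB; apply: ler_sum => H Hc.
  have := wS_ge0 w0 H; rewrite /kf; case: ifP => _; case: ifP => _ /= h; lra.
have hS1 : S1 <= alpha * m.
  by have := one_sum sym r hb am0; rewrite !inE (negbTE rnc).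
have hS2 : S2 <= (if r2 == c then 0 else alpha * m).
  by have := one_sum sym r2 hb am0; rewrite !inE; case: (r2 == c).
have dc := eqC c cC'.
have h1 : 0 <= (1 - 2 * alpha) * w c by apply: mulr_ge0; rewrite ?subr_ge0.
have h2 : 0 <= alpha * W by apply: mulr_ge0.
have h3 : 0 <= (2 - 3 * alpha) * w c by apply: mulr_ge0; rewrite ?subr_ge0 //; lra.
move=> hc; apply: le_trans hc; move: hS2; rewrite hm.
have [r2c|r2nc] := eqVneq r2 c.
  subst r2; rewrite dc dCr2 => hS2; nra.
have dC2 : (1 < dC c)%N by apply: (depth_ge2 stC r2C dCr2 cC'); rewrite eq_sym.
have h4 : 3 * w c <= w c * (d c)%:R.
  rewrite mulrC; apply: ler_wpM2l => //; rewrite dc ler_nat; exact: dC2.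
move=> hS2; nra.
Qed.
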